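(* Let $\varepsilon\in(0,1)$ and $\alpha=\frac{\varepsilon}{1+\varepsilon}$. Consider the predator–prey system with simultaneous harvesting of both species $$\dot X=(2-Y-U)X,\qquad \dot Y=(X-U)Y,$$ on $\{X>0,Y>0\}$, under the feedback $U=1+\varepsilon(Y-1)$ (so that the closed loop is $\dot X=-(1+\varepsilon)(Y-1)X$, $\dot Y=[X-1-\varepsilon(Y-1)]Y$). Define $$\Pi(X)=\frac{1}{X^{\alpha}}\Big[X-1-\frac{1+\varepsilon}{\varepsilon}\big(X^{\alpha}-1\big)\Big]$$ and $$V(X,Y)=\Psi(X)+(1+\varepsilon)\Psi(Y)+\Pi(X)+\Psi\!\Big(\frac{Y}{X^{\alpha}}\Big).$$ Then $\Pi(1)=0$ and $\Pi(X)>0$ for $X\in(0,1)\cup(1,\infty)$; $V$ is positive definite with respect to $(1,1)$ and radially unbounded on $\{X>0,Y>0\}$; and along the closed-loop solutions $$\dot V=-\frac{(X-1)\big(X^{\alpha}-1\big)}{X^{\alpha}}-(1+\varepsilon)\varepsilon(Y-1)^2,$$ which is negative definite on the quadrant. Hence $V$ is a strict CLF for the closed loop on $\{X>0,Y>0\}$.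
   Context: $\Psi(S)=S-1-\ln S$ for $S>0$. Radially unbounded on the quadrant means $V\to\infty$ as $(X,Y)$ approaches $\{X=0\}\cup\{Y=0\}$ or as $X+Y\to\infty$. *)

(* Defs.v *)
From Stdlib Require Import Reals.
From Coquelicot Require Import Coquelicot.
Open Scope R_scope.

Definition Psi (S : R) : R := S - 1 - ln S.

Definition alpha (eps : R) : R := eps / (1 + eps).

Definition Pi (eps X : R) : R :=
  / Rpower X (alpha eps) *
  (X - 1 - (1 + eps) / eps * (Rpower X (alpha eps) - 1)).

Definition V (eps X Y : R) : R :=
  Psi X + (1 + eps) * Psi Y + Pi eps X + Psi (Y / Rpower X (alpha eps)).

Definition U (eps Y : R) : R := 1 + eps * (Y - 1).

Definition fX (eps X Y : R) : R := (2 - Y - U eps Y) * X.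
Definition fY (eps X Y : R) : R := (X - U eps Y) * Y.

Definition Vdot (eps X Y : R) : R :=
  - ((X - 1) * (Rpower X (alpha eps) - 1) / Rpower X (alpha eps))
  - (1 + eps) * eps * (Y - 1) ^ 2.

(* Main.v *)
Require Import Defs.
From Stdlib Require Import Reals Lra Psatz.
From Coquelicot Require Import Coquelicot.
Open Scope R_scope.

Lemma ln_le_sub1 x : 0 < x -> ln x <= x - 1.
Proof. intros hx. pose proof (exp_ineq1_le (ln x)). rewrite exp_ln in H; lra. Qed.

Lemma Psi_ge0 S : 0 < S -> 0 <= Psi S.
Proof. intros h; unfold Psi; pose proof (ln_le_sub1 S h); lra. Qed.

Lemma Psi_gt0 S : 0 < S -> S <> 1 -> 0 < Psi S.
Proof.
  intros h h1; unfold Psi.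
  assert (ln S <> 0). { intro E. apply h1. rewrite <- (exp_ln S h), E. apply exp_0. }
  pose proof (exp_ineq1 _ H). rewrite exp_ln in H0; lra.
Qed.

Lemma Psi_lin S : 0 < S -> S / 2 - 1 <= Psi S.
Proof.
  intros h; unfold Psi.
  assert (ln S = ln 2 + ln (S/2)).
  { rewrite <- ln_mult by lra. f_equal. field. }
  pose proof (ln_le_sub1 (S/2) ltac:(lra)). assert (ln 2 < 1).
  { rewrite <- (ln_exp 1). apply ln_increasing; [lra|]. pose proof (exp_ineq1 1 ltac:(lra)); lra. }
  lra.
Qed.

Lemma key a u : 0 < a < 1 -> u <> 0 -> exp (a*u) < a * exp u + (1 - a).
Proof.
  intros ha hu.
  assert (e1 : exp u = exp (a*u) * exp ((1-a)*u)) by (rewrite <- exp_plus; f_equal; ring).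
  assert (e2 : 1 = exp (a*u) * exp (-(a*u))) by (rewrite <- exp_plus; replace (a*u + - (a*u)) with 0 by ring; now rewrite exp_0).
  assert (i1 : 1 + (1-a)*u < exp ((1-a)*u)) by (apply exp_ineq1; nra).
  assert (i2 : 1 + -(a*u) < exp (-(a*u))) by (apply exp_ineq1; nra).
  pose proof (exp_pos (a*u)).
  assert (exp (a*u) * (1 + (1-a)*u) < exp (a*u) * exp ((1-a)*u)) by (apply Rmult_lt_compat_l; lra).
  assert (exp (a*u) * (1 + -(a*u)) < exp (a*u) * exp (-(a*u))) by (apply Rmult_lt_compat_l; lra).
  rewrite e1. nra.
Qed.

Lemma alpha_bounds eps : 0 < eps < 1 -> 0 < alpha eps < 1.
Proof. intros h; unfold alpha; split. apply Rdiv_lt_0_compat; lra.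
  apply (Rmult_lt_reg_r (1+eps)); [lra|]. field_simplify; lra. Qed.

Lemma Pi_ge0 eps X : 0 < eps < 1 -> 0 < X -> 0 <= Pi eps X.
Proof.
  intros he hx. pose proof (alpha_bounds eps he) as ha.
  unfold Pi, Rpower. set (u := ln X). pose proof (exp_pos (alpha eps * u)).
  assert (ex : X = exp u) by (unfold u; now rewrite exp_ln).
  assert (hc : (1+eps)/eps = / alpha eps) by (unfold alpha; field; lra).
  rewrite hc.
  destruct (Req_dec u 0) as [hu|hu].
  - rewrite ex, hu, Rmult_0_r, exp_0. lra.
  - pose proof (key _ _ ha hu). apply Rlt_le, Rmult_lt_0_compat. apply Rinv_0_lt_compat; lra.
    rewrite <- ex in H0. 
    assert (exp (alpha eps * u) - 1 < alpha eps * (X - 1)) by lra.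
    assert (/ alpha eps * (exp (alpha eps * u) - 1) < / alpha eps * (alpha eps * (X - 1))).
    { apply Rmult_lt_compat_l; [apply Rinv_0_lt_compat; lra | lra]. }
    rewrite <- Rmult_assoc, Rinv_l, Rmult_1_l in H2 by lra. lra.
Qed.

Lemma Pi_gt0 eps X : 0 < eps < 1 -> 0 < X -> X <> 1 -> 0 < Pi eps X.
Proof.
  intros he hx hx1. pose proof (alpha_bounds eps he) as ha.
  unfold Pi, Rpower. set (u := ln X). pose proof (exp_pos (alpha eps * u)).
  assert (ex : X = exp u) by (unfold u; now rewrite exp_ln).
  assert (hc : (1+eps)/eps = / alpha eps) by (unfold alpha; field; lra).
  rewrite hc.
  assert (hu : u <> 0) by (intro E; apply hx1; rewrite ex, E; apply exp_0).
  pose proof (key _ _ ha hu). apply Rmult_lt_0_compat. apply Rinv_0_lt_compat; lra.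
  rewrite <- ex in H0.
  assert (exp (alpha eps * u) - 1 < alpha eps * (X - 1)) by lra.
  assert (/ alpha eps * (exp (alpha eps * u) - 1) < / alpha eps * (alpha eps * (X - 1))).
  { apply Rmult_lt_compat_l; [apply Rinv_0_lt_compat; lra | lra]. }
  rewrite <- Rmult_assoc, Rinv_l, Rmult_1_l in H2 by lra. lra.
Qed.

Lemma V_lower eps X Y : 0 < eps < 1 -> 0 < X -> 0 < Y -> Psi X + Psi Y <= V eps X Y.
Proof.
  intros he hx hy. unfold V.
  pose proof (Pi_ge0 eps X he hx). pose proof (Psi_ge0 Y hy).
  assert (0 < Rpower X (alpha eps)) by (unfold Rpower; apply exp_pos).
  pose proof (Psi_ge0 (Y / Rpower X (alpha eps)) ltac:(apply Rdiv_lt_0_compat; lra)).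
  nra.
Qed.

Lemma Rpower_1 a : Rpower 1 a = 1.
Proof. unfold Rpower; now rewrite ln_1, Rmult_0_r, exp_0. Qed.

Lemma sign_lemma a X : 0 < a -> 0 < X -> X <> 1 -> 0 < (X - 1) * (Rpower X a - 1).
Proof.
  intros ha hx hn. unfold Rpower.
  destruct (Rlt_or_le X 1) as [h|h].
  - assert (ln X < 0) by (rewrite <- ln_1; apply ln_increasing; lra).
    assert (exp (a * ln X) < 1) by (rewrite <- exp_0; apply exp_increasing; nra).
    nra.
  - assert (0 < ln X) by (rewrite <- ln_1; apply ln_increasing; lra).
    assert (1 < exp (a * ln X)) by (rewrite <- exp_0; apply exp_increasing; nra).
    nra.
Qed.

Theorem theorem2 (eps : R) (Heps : 0 < eps < 1) :
  (* Pi(1) = 0 and Pi > 0 on (0,1) U (1,oo) *)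
  (Pi eps 1 = 0 /\ (forall X, 0 < X -> X <> 1 -> 0 < Pi eps X)) /\
  (* V positive definite w.r.t. (1,1) on the open quadrant *)
  (V eps 1 1 = 0 /\
   (forall X Y, 0 < X -> 0 < Y -> (X, Y) <> (1, 1) -> 0 < V eps X Y)) /\
  (* V radially unbounded on the quadrant: V -> +oo as (X,Y) approaches
     {X = 0} U {Y = 0} or as X + Y -> +oo *)
  (forall M : R, exists delta K : R, 0 < delta /\
     forall X Y, 0 < X -> 0 < Y -> (X < delta \/ Y < delta \/ K < X + Y) ->
       M < V eps X Y) /\
  (* along every closed-loop solution in the quadrant, d/dt V = Vdot *)
  (forall (x y : R -> R) (t : R),
     0 < x t -> 0 < y t ->
     is_derive x t (fX eps (x t) (y t)) ->
     is_derive y t (fY eps (x t) (y t)) ->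
     is_derive (fun s => V eps (x s) (y s)) t (Vdot eps (x t) (y t))) /\
  (* Vdot negative definite on the quadrant *)
  (Vdot eps 1 1 = 0 /\
   (forall X Y, 0 < X -> 0 < Y -> (X, Y) <> (1, 1) -> Vdot eps X Y < 0)).
Proof.
  pose proof (alpha_bounds eps Heps) as ha.
  assert (Pi1 : Pi eps 1 = 0) by (unfold Pi; rewrite Rpower_1; ring).
  assert (Psi1 : Psi 1 = 0) by (unfold Psi; rewrite ln_1; ring).
  split; [split; [exact Pi1 | intros; now apply Pi_gt0] |].
  split.
  { split.
    - unfold V. rewrite Pi1, Rpower_1, Rdiv_1_r, Psi1. ring.
    - intros X Y hx hy hne. unfold V.
      pose proof (Pi_ge0 eps X Heps hx). pose proof (Psi_ge0 Y hy). pose proof (Psi_ge0 X hx).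
      assert (0 < Rpower X (alpha eps)) by (unfold Rpower; apply exp_pos).
      pose proof (Psi_ge0 (Y / Rpower X (alpha eps)) ltac:(apply Rdiv_lt_0_compat; lra)).
      destruct (Req_dec X 1) as [e|n].
      + assert (Y <> 1) by (intro; apply hne; subst; auto).
        pose proof (Psi_gt0 Y hy H4). nra.
      + pose proof (Psi_gt0 X hx n). nra. }
  split.
  { intros M. set (m := Rabs M + 2).
    exists (exp (- m)), (4 * m). split; [apply exp_pos|].
    pose proof (Rle_abs M).
    intros X Y hx hy HH.
    pose proof (V_lower eps X Y Heps hx hy).
    pose proof (Psi_ge0 X hx) as g1. pose proof (Psi_ge0 Y hy) as g2.
    pose proof (Psi_lin X hx). pose proof (Psi_lin Y hy).
    unfold m in *.
    destruct HH as [h|[h|h]].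
    - assert (ln X < - (Rabs M + 2)).
      { rewrite <- (ln_exp (- (Rabs M + 2))). apply ln_increasing; auto. }
      assert (Psi X > Rabs M + 1) by (unfold Psi; lra). lra.
    - assert (ln Y < - (Rabs M + 2)).
      { rewrite <- (ln_exp (- (Rabs M + 2))). apply ln_increasing; auto. }
      assert (Psi Y > Rabs M + 1) by (unfold Psi; lra). lra.
    - lra. }
  split.
  { intros x y t hx hy dx dy.
    unfold V, Pi, Psi, Rpower.
    auto_derive.
    - pose proof (exp_pos (alpha eps * ln (x t))).
      repeat split; try (eexists; eassumption); try lra.
      apply Rmult_lt_0_compat; [lra | apply Rinv_0_lt_compat; lra].
    - replace (Derive (fun s => x s) t) with (fX eps (x t) (y t)) by (symmetry; now apply is_derive_unique). replace (Derive (fun s => y s) t) with (fY eps (x t) (y t)) by (symmetry; now apply is_derive_unique).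
      pose proof (exp_pos (alpha eps * ln (x t))).
      unfold Vdot, Rpower, fX, fY, U, alpha in *.
      generalize dependent (exp (eps / (1 + eps) * ln (x t))). generalize dependent (x t). generalize dependent (y t). intros Y hY X hX _ _ p hp. field. repeat split; lra. }
  split.
  { unfold Vdot. rewrite Rpower_1. unfold Rdiv. rewrite Rinv_1. ring. }
  intros X Y hx hy hne. unfold Vdot.
  assert (hp : 0 < Rpower X (alpha eps)) by (unfold Rpower; apply exp_pos).
  destruct (Req_dec X 1) as [e|n].
  - subst. assert (Y <> 1) by (intro; apply hne; subst; auto).
    rewrite Rpower_1. assert (0 < (Y-1)^2) by (apply pow2_gt_0; lra).
    assert (0 < (1+eps)*eps) by nra. nra.
  - pose proof (sign_lemma (alpha eps) X ltac:(lra) hx n).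
    assert (0 < (X - 1) * (Rpower X (alpha eps) - 1) / Rpower X (alpha eps))
      by (apply Rdiv_lt_0_compat; lra).
    assert (0 <= (1+eps)*eps) by nra.
    assert (0 <= (Y-1)^2) by (apply pow2_ge_0). nra.
Qed.
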